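(* Let $F$ be a finitary set functor with $F\emptyset\ne\emptyset$, with a presentation $\varepsilon\colon H_\Sigma\to F$ and chosen $p'\in\Sigma_0$, $p=\varepsilon_\emptyset(p')$. For every coalgebra $\alpha\colon X\to FX$, the unique coalgebra homomorphism $h\colon(X,\alpha)\to(\nu F,\tau)$ is the join in $(\nu F)^X$ (ordered pointwise by cutting) of the $\omega$-chain $(m\cdot h_n)_{n\in\mathbb N}$ of approximate homomorphisms: $h=\bigsqcup_n m\cdot h_n$.
   Context: $F$ finitary = preserves filtered colimits. $(\mu F,\varphi)$: initial algebra, the colimit of $F^n0$ ($F^00=\emptyset$, $F^{n+1}0=F(F^n0)$) with injections $i_n\colon F^n0\to\mu F$; $(\nu F,\tau)$: terminal coalgebra. $m\colon\mu F\to\nu F$: the unique coalgebra homomorphism $(\mu F,\varphi^{-1})\to(\nu F,\tau)$ (injective). Approximate homomorphisms $h_n\colon X\to\mu F$: $h_0$ is the constant map with value $i_1(p)$ (the least element of $\mu F$), $h_{n+1}=\varphi\cdot Fh_n\cdot\alpha$. Order by cutting on $\nu F$: presentation = finitary signature $\Sigma$, $H_\Sigma Y=\coprod_n\Sigma_n\times Y^n$, natural $\varepsilon\colon H_\Sigma\to F$ with surjective components. $\nu H_\Sigma$ = all $\Sigma$-trees (ordered rooted trees labelled in $\Sigma$, node labelled in $\Sigma_n$ has $n$ children) with $\tau'$ = inverse tree tupling, $\mu H_\Sigma$ = finite ones. $\partial'_ns$: delete nodes of height $>n$, relabel nodes of height $n$ by $p'$. $h^\sharp\colon\mu H_\Sigma\to\mu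 F$: the unique $\Sigma$-algebra homomorphism into $(\mu F,\varphi\varepsilon_{\mu F})$; $\sim$ its kernel; $s\sim^*s'$ iff $\partial'_ns\sim\partial'_ns'$ for all $n$. $\hat k\colon\nu H_\Sigma\to\nu F$: the unique $F$-coalgebra homomorphism $(\nu H_\Sigma,\varepsilon_{\nu H_\Sigma}\tau')\to(\nu F,\tau)$, surjective with kernel $\sim^*$. $x\le y$ in $\nu F$ iff $x=y$ or $x=\hat k(s)$, $y=\hat k(s')$ with $s\sim^*\partial'_ns'$ for some $n$. *)

(* Defs.v *)
From mathcomp Require Import all_boot.
Set Implicit Arguments.
Unset Strict Implicit.
Unset Printing Implicit Defensive.

Definition is_functor (F : Type -> Type)
    (fmap : forall A B : Type, (A -> B) -> F A -> F B) : Prop :=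
  (forall (A : Type) (x : F A), fmap A A (fun a => a) x = x) /\
  (forall (A B C : Type) (f : A -> B) (g : B -> C) (x : F A),
      fmap A C (fun a => g (f a)) x = fmap B C g (fmap A B f x)).

(* Finitary set functor: every element of F X lies in the image of F i for
   some finite subset i of X (equivalently for set functors: preservation of
   filtered colimits). A finite subset is given as the image of
   a map 'I_n -> X. *)
Definition finitary (F : Type -> Type)
    (fmap : forall A B : Type, (A -> B) -> F A -> F B) : Prop :=
  forall (X : Type) (x : F X),
    exists (n : nat) (i : 'I_n -> X) (y : F 'I_n), fmap _ _ i y = x.

Definition is_initial_alg (F : Type -> Type)
    (fmap : forall A B : Type, (A -> B) -> F A -> F B)
    (M : Type) (phi : F M -> M) : Prop :=
  forall (A : Type) (a : F A -> A),
    exists h : M -> A,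
      (forall t, h (phi t) = a (fmap _ _ h t)) /\
      (forall h' : M -> A, (forall t, h' (phi t) = a (fmap _ _ h' t)) ->
          forall x, h' x = h x).

Definition is_terminal_coalg (F : Type -> Type)
    (fmap : forall A B : Type, (A -> B) -> F A -> F B)
    (N : Type) (tau : N -> F N) : Prop :=
  forall (A : Type) (a : A -> F A),
    exists h : A -> N,
      (forall x, tau (h x) = fmap _ _ h (a x)) /\
      (forall h' : A -> N, (forall x, tau (h' x) = fmap _ _ h' (a x)) ->
          forall x, h' x = h x).

Definition HSig (Sig : nat -> Type) (Y : Type) : Type :=
  {n : nat & (Sig n * n.-tuple Y)%type}.

Definition HSig_map (Sig : nat -> Type) (A B : Type) (f : A -> B)
    (u : HSig Sig A) : HSig Sig B :=
  let: existT n (s, t) := u in existT _ n (s, map_tuple f t).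

Definition HSig_const (Sig : nat -> Type) (Y : Type) (p' : Sig 0) : HSig Sig Y :=
  existT (fun n => (Sig n * n.-tuple Y)%type) 0 (p', [tuple]).

Definition is_natural (Sig : nat -> Type) (F : Type -> Type)
    (fmap : forall A B : Type, (A -> B) -> F A -> F B)
    (eps : forall Y : Type, HSig Sig Y -> F Y) : Prop :=
  forall (A B : Type) (f : A -> B) (u : HSig Sig A),
    eps B (HSig_map f u) = fmap _ _ f (eps A u).

Definition empty_map (A : Type) (e : Empty_set) : A := match e with end.

(* h_0 = const i_1(p) where i_1 = phi . F(i_0), i_0 : 0 -> muF;
   h_{n+1} = phi . F h_n . alpha *)
Fixpoint approx_hom (F : Type -> Type)
    (fmap : forall A B : Type, (A -> B) -> F A -> F B)
    (muF : Type) (phi : F muF -> muF) (p : F Empty_set)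
    (X : Type) (alpha : X -> F X) (n : nat) (x : X) : muF :=
  match n with
  | 0 => phi (fmap _ _ (@empty_map muF) p)
  | k.+1 => phi (fmap _ _ (approx_hom fmap phi p alpha k) (alpha x))
  end.

(* partial'_n : nuH_Sigma -> muH_Sigma (delete nodes of height > n, relabel
   nodes of height n by p') *)
Fixpoint cut (Sig : nat -> Type) (p' : Sig 0)
    (muH : Type) (phi' : HSig Sig muH -> muH)
    (nuH : Type) (tau' : nuH -> HSig Sig nuH) (n : nat) (s : nuH) : muH :=
  match n with
  | 0 => phi' (HSig_const muH p')
  | k.+1 => phi' (HSig_map (cut p' phi' tau' k) (tau' s))
  end.

Definition sim_star (Sig : nat -> Type) (p' : Sig 0)
    (muH : Type) (phi' : HSig Sig muH -> muH)
    (nuH : Type) (tau' : nuH -> HSig Sig nuH)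
    (muF : Type) (hsharp : muH -> muF) (s s' : nuH) : Prop :=
  forall n, hsharp (cut p' phi' tau' n s) = hsharp (cut p' phi' tau' n s').

(* order by cutting on nuF; m' : muH -> nuH views finite trees as trees *)
Definition cut_le (Sig : nat -> Type) (p' : Sig 0)
    (muH : Type) (phi' : HSig Sig muH -> muH)
    (nuH : Type) (tau' : nuH -> HSig Sig nuH)
    (muF : Type) (hsharp : muH -> muF) (m' : muH -> nuH)
    (nuF : Type) (khat : nuH -> nuF) (x y : nuF) : Prop :=
  x = y \/
  exists (s s' : nuH) (n : nat),
    [/\ x = khat s, y = khat s' &
        sim_star p' phi' tau' hsharp s (m' (cut p' phi' tau' n s'))].

Definition is_pointwise_join (X A : Type) (le : A -> A -> Prop)
    (c : nat -> X -> A) (j : X -> A) : Prop :=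
  (forall n x, le (c n x) (j x)) /\
  (forall g : X -> A, (forall n x, le (c n x) (g x)) -> forall x, le (j x) (g x)).

(* Main.v *)
Require Import Defs.
From mathcomp Require Import all_boot.
From mathcomp Require Import zify.
From Stdlib Require Import FunctionalExtensionality ProofIrrelevance ClassicalDescription ClassicalEpsilon Classical.

Lemma HSig_map_comp (Sig : nat -> Type) (A B C : Type) (f : A -> B) (g : B -> C) u :
  HSig_map g (HSig_map f u) = HSig_map (fun a => g (f a)) u :> HSig Sig C.
Proof.
case: u => n [s t] /=; do 2 f_equal; apply: val_inj => /=.
by rewrite -map_comp.
Qed.

Lemma HSig_map_ext (Sig : nat -> Type) (A B : Type) (f g : A -> B) u :
  (forall a, f a = g a) -> HSig_map f u = HSig_map g u :> HSig Sig B.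
Proof. by move=> E; rewrite (functional_extensionality f g E). Qed.

Lemma HSig_map_const (Sig : nat -> Type) (A B : Type) (f : A -> B) (p' : Sig 0) :
  HSig_map f (HSig_const A p') = HSig_const B p'.
Proof. rewrite /HSig_const /=; by rewrite [map_tuple _ _]tuple0. Qed.

Lemma fmap_ext (F : Type -> Type) (fmap : forall A B : Type, (A -> B) -> F A -> F B)
  A B (f g : A -> B) x : (forall a, f a = g a) -> fmap A B f x = fmap A B g x.
Proof. by move=> E; rewrite (functional_extensionality f g E). Qed.
Arguments fmap_ext {F} fmap {A B f g x}.
Arguments HSig_map_ext {Sig A B f g u}.

Theorem corollary6p5
  (F : Type -> Type) (fmap : forall A B : Type, (A -> B) -> F A -> F B)
  (Ffun : @is_functor F fmap) (Ffin : @finitary F fmap)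
  (Fne : inhabited (F Empty_set))
  (Sig : nat -> Type) (eps : forall Y : Type, HSig Sig Y -> F Y)
  (eps_nat : @is_natural Sig F fmap eps)
  (eps_surj : forall (Y : Type) (y : F Y), exists u, eps Y u = y)
  (p' : Sig 0)
  (muF : Type) (phi : F muF -> muF) (muF_init : @is_initial_alg F fmap muF phi)
  (nuF : Type) (tau : nuF -> F nuF) (nuF_term : @is_terminal_coalg F fmap nuF tau)
  (muH : Type) (phi' : HSig Sig muH -> muH)
  (muH_init : @is_initial_alg (HSig Sig) (@HSig_map Sig) muH phi')
  (nuH : Type) (tau' : nuH -> HSig Sig nuH)
  (nuH_term : @is_terminal_coalg (HSig Sig) (@HSig_map Sig) nuH tau')
  (m : muF -> nuF) (m_hom : forall u, tau (m (phi u)) = fmap _ _ m u)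
  (m' : muH -> nuH) (m'_hom : forall u, tau' (m' (phi' u)) = HSig_map m' u)
  (hsharp : muH -> muF)
  (hsharp_hom : forall u, hsharp (phi' u) = phi (eps muF (HSig_map hsharp u)))
  (khat : nuH -> nuF)
  (khat_hom : forall s, tau (khat s) = fmap _ _ khat (eps nuH (tau' s)))
  (X : Type) (alpha : X -> F X)
  (h : X -> nuF) (h_hom : forall x, tau (h x) = fmap _ _ h (alpha x)) :
  let p := eps Empty_set (HSig_const Empty_set p') in
  let le := cut_le p' phi' tau' hsharp m' khat in
  let hn := fun n x => m (approx_hom fmap phi p alpha n x) in
  (forall n x, le (hn n x) (hn n.+1 x)) /\ is_pointwise_join le hn h.
Proof.
Proof.
move=> p le hn.
case: Ffun => Fid Fcomp.
(* Lambek *)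
have phi_inj : forall u v, phi u = phi v -> u = v.
  have [j [jh _]] := muF_init _ (fmap _ _ phi).
  have [h0 [_ h0u]] := muF_init _ phi.
  have pj : forall z, phi (j z) = z.
    move=> z.
    have e1 : forall z, phi (j z) = h0 z.
      by apply: h0u => t; rewrite jh -Fcomp.
    have e2 : forall z, z = h0 z.
      by apply: (h0u (fun z => z)) => t; rewrite Fid.
    by rewrite e1 -e2.
  have jp : forall t, j (phi t) = t.
    by move=> t; rewrite jh -Fcomp (fmap_ext fmap pj) Fid.
  by move=> u v E; rewrite -(jp u) -(jp v) E.
pose d := approx_hom fmap phi p tau.
have d0 : forall y, d 0 y = phi (fmap _ _ (@empty_map muF) p) by [].
have dS : forall n y, d n.+1 y = phi (fmap _ _ (d n) (tau y)) by [].
have dm : forall j n y, d j (m (d n y)) = d (minn j n) y.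
  elim=> [|j IH] n y; first by rewrite min0n.
  case: n => [|n].
    rewrite /minn /= dS d0 m_hom -!Fcomp; congr phi.
    by by apply: (fmap_ext fmap) => -[].
  by rewrite minnSS dS [d n.+1 y]dS m_hom -Fcomp -Fcomp dS (fmap_ext fmap (IH n)).
have mono : forall n N a b, n <= N -> d N a = d N b -> d n a = d n b.
  move=> n N a b /minn_idPl <- E; by rewrite -!dm E.
have Sep : forall a b, (forall n, d n a = d n b) -> a = b.
  move=> a0 b0 H0.
  pose Q := {f : nat -> muF | exists a, f = fun n => d n a}.
  pose q := fun a : nuF => exist (fun f => exists a', f = fun n => d n a') (fun n => d n a) (ex_intro _ a erefl) : Q.
  have q_eq : forall a b, (forall n, d n a = d n b) -> q a = q b.
    move=> a b E; apply: eq_sig_hprop => /=.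
    - by move=> *; apply: proof_irrelevance.
    - by apply: functional_extensionality.
  have K : forall x y, (forall n, d n x = d n y) -> fmap _ _ q (tau x) = fmap _ _ q (tau y).
    move=> x y Hxy.
    have Hf : forall n, fmap _ _ (d n) (tau x) = fmap _ _ (d n) (tau y).
      by move=> n; apply: phi_inj; rewrite -!dS.
    have [N1 [i1 [a1 E1]]] := Ffin _ (tau x).
    have [N2 [i2 [a2 E2]]] := Ffin _ (tau y).
    pose I := ('I_N1 + 'I_N2)%type.
    pose e := fun k : I => match k with inl k1 => i1 k1 | inr k2 => i2 k2 end.
    have Ex : tau x = fmap _ _ e (fmap _ _ inl a1) by rewrite -Fcomp -E1.
    have Ey : tau y = fmap _ _ e (fmap _ _ inr a2) by rewrite -Fcomp -E2.
    move: Hf; rewrite Ex Ey => Hf.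
    set A := fmap _ _ inl a1 in Hf *.
    set B := fmap _ _ inr a2 in Hf *.
    have Hf' : forall n, fmap _ _ (fun k => d n (e k)) A = fmap _ _ (fun k => d n (e k)) B.
      by move=> n; rewrite !(Fcomp _ _ _ e (d n)).
    pose Nf := fun (ij : I * I) =>
      match excluded_middle_informative (exists n, d n (e ij.1) <> d n (e ij.2)) with
      | left H => proj1_sig (constructive_indefinite_description _ H)
      | right _ => 0 end.
    pose n0 := \max_(ij : I * I) Nf ij.
    have key : forall i j, d n0 (e i) = d n0 (e j) -> q (e i) = q (e j).
      move=> i j E; apply: q_eq => n.
      case: (classic (d n (e i) = d n (e j))) => // Hn; exfalso.
      have Hle0 : Nf (i, j) <= n0 := @leq_bigmax _ Nf (i, j).
      move: Hle0; rewrite /Nf /=.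
      case: excluded_middle_informative => [H|H]; last by exfalso; apply: H; exists n.
      case: (constructive_indefinite_description _ H) => n1 Hn1 /= Hle.
      by apply: Hn1; exact: mono Hle E.
    pose w := fun v : muF =>
      match excluded_middle_informative (exists i, d n0 (e i) = v) with
      | left H => q (e (proj1_sig (constructive_indefinite_description _ H)))
      | right _ => q x end.
    have we : forall i, w (d n0 (e i)) = q (e i).
      move=> i; rewrite /w; case: excluded_middle_informative => [H|H]; last first.
        by exfalso; apply: H; exists i.
      by case: (constructive_indefinite_description _ H) => i' /= Hi'; apply: key.
    transitivity (fmap _ _ w (fmap _ _ (fun k => d n0 (e k)) A)).
      by rewrite -!Fcomp; apply: (fmap_ext fmap) => k; rewrite we.
    by rewrite Hf' -!Fcomp; apply: (fmap_ext fmap) => k; rewrite we.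
  pose rep := fun z : Q => proj1_sig (constructive_indefinite_description _ (proj2_sig z)).
  have repP : forall z, proj1_sig z = (fun n => d n (rep z)).
    by move=> z; exact: proj2_sig (constructive_indefinite_description _ (proj2_sig z)).
  pose gam := fun z => fmap _ _ q (tau (rep z)).
  have gq : forall a, gam (q a) = fmap _ _ q (tau a).
    move=> a; apply: K => n.
    by have := f_equal (fun f => f n) (repP (q a)).
  have [u [uh _]] := nuF_term _ gam.
  have [hid [_ ide]] := nuF_term _ tau.
  have uq : forall a, u (q a) = a.
    have e1 : forall a, u (q a) = hid a.
      by apply: ide => a; rewrite uh gq -Fcomp.
    have e2 : forall a, a = hid a.
      by apply: (ide (fun a => a)) => a; rewrite Fid.
    by move=> a; rewrite e1 -e2.
  have E0 := q_eq _ _ H0.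
  by rewrite -(uq a0) E0 uq.
have ksurj : forall a, exists s, khat s = a.
  pose beta := fun a => proj1_sig (constructive_indefinite_description _ (eps_surj _ (tau a))).
  have betaP : forall a, eps _ (beta a) = tau a.
    by move=> a; exact: proj2_sig (constructive_indefinite_description _ (eps_surj _ (tau a))).
  have [g [gh _]] := nuH_term _ beta.
  have [hid [_ ide]] := nuF_term _ tau.
  have e1 : forall a, khat (g a) = hid a.
    by apply: ide => a; rewrite khat_hom gh eps_nat -Fcomp betaP.
  have e2 : forall a, a = hid a.
    by apply: (ide (fun a => a)) => a; rewrite Fid.
  by move=> a; exists (g a); rewrite e1 -e2.
have dk : forall n s, d n (khat s) = hsharp (cut p' phi' tau' n s).
  elim=> [|n IH] s.
    by rewrite d0 /= hsharp_hom HSig_map_const /p -eps_nat HSig_map_const.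
  rewrite dS khat_hom -Fcomp (fmap_ext fmap IH) -eps_nat /= hsharp_hom HSig_map_comp.
  by [].
have cm : forall j k s, cut p' phi' tau' j (m' (cut p' phi' tau' k s)) = cut p' phi' tau' (minn j k) s.
  elim=> [|j IH] k s; first by rewrite min0n.
  case: k => [|k].
    by rewrite minn0 /= m'_hom !HSig_map_const.
  by rewrite minnSS /= m'_hom !HSig_map_comp (HSig_map_ext (IH k)).
have leD : forall a b, le a b <-> a = b \/ exists k, forall j, d j a = d (minn j k) b.
  move=> a b; rewrite /le /cut_le /sim_star; split.
    case=> [->|[s [s' [k [-> -> S]]]]]; first by left.
    by right; exists k => j; rewrite dk (S j) cm dk.
  case=> [->|[k Hk]]; first by left.
  right; have [s Es] := ksurj a; have [s' Es'] := ksurj b.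
  exists s; exists s'; exists k; apply: And3 => [//|//|j].
  by rewrite cm -!dk Es Es' Hk.
have ah : forall n x, approx_hom fmap phi p alpha n x = d n (h x).
  elim=> [|n IH] x //.
  by rewrite /= (fmap_ext fmap IH) (Fcomp _ _ _ h (d n)) -h_hom.
have hnE : forall n x, hn n x = m (d n (h x)) by move=> n x; rewrite /hn ah.
split.
  move=> n x; rewrite !hnE; apply/leD; right; exists n => j; rewrite !dm.
  by have -> : minn (minn j n) n.+1 = minn j n by lia.
split.
  by move=> n x; rewrite hnE; apply/leD; right; exists n => j; rewrite dm.
move=> G HG x.
have HG' : forall n, le (m (d n (h x))) (G x) by move=> n; rewrite -hnE.
move: (h x) (G x) HG' => y z HG'.
have Hn : forall n, (forall j, d (minn j n) y = d j z) \/
                    exists k, forall j, d (minn j n) y = d (minn j k) z.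
  move=> n; have := HG' n; move=> /leD [E|[k Hk]].
    by left => j; rewrite -E dm.
  by right; exists k => j; rewrite -dm.
pose P := fun n => exists k, k < n /\ forall j, d (minn j n) y = d (minn j k) z.
have notP : forall n, ~ P n -> forall j, j <= n -> d j y = d j z.
  move=> n nP j jn; case: (Hn n) => [A|[k Hk]].
    by have := A j; have -> : minn j n = j by lia.
  case: (leqP n k) => nk.
    have E1 : minn j n = j by lia.
    have E2 : minn j k = j by lia.
    by have := Hk j; rewrite E1 E2.
  by exfalso; apply: nP; exists k.
case: (classic (exists N, forall n, N <= n -> P n)) => [[N HN]|Hno].
  apply/leD; right.
  have st : forall i, d (N + i) y = d N y.
    elim=> [|i IHi]; first by rewrite addn0.
    have [k [kl Hk]] := HN (N + i).+1 ltac:(lia).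
    have e1 := Hk (N + i); have e2 := Hk (N + i).+1.
    move: e1 e2.
    have -> : minn (N + i) (N + i).+1 = N + i by lia.
    have -> : minn (N + i) k = k by lia.
    have -> : minn (N + i).+1 (N + i).+1 = (N + i).+1 by lia.
    have -> : minn (N + i).+1 k = k by lia.
    by move=> e1 e2; rewrite addnS e2 -e1.
  have [k [kN Hk]] := HN N (leqnn N).
  exists k => j.
  case: (leqP j N) => jN.
    by have := Hk j; have -> : minn j N = j by lia.
  have := Hk j; have -> : minn j N = N by lia.
  move=> <-; have := st (j - N); by rewrite subnKC // ltnW.
apply/leD; left; apply: Sep => j.
have [n [jn nP]] : exists n, j <= n /\ ~ P n.
  apply: NNPP => C; apply: Hno; exists j => n jn; apply: NNPP => nP; apply: C; by exists n.
exact: notP n nP j jn.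
Qed.
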